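(* Let $R$ be a commutative ring with identity and $M$ an $R$-module; for $a\in R$ let $\mathfrak{a}=aR$. The following statements are equivalent: (1) $M$ is reduced; (2) $a\Gamma_{a}(M)=0$ for all $a\in R$; (3) $(0:_M a)=(0:_M a^{k})$ for all $a\in R$ and all $k\in\mathbb{Z}^{+}$; (4) $\varinjlim_{k}\operatorname{Hom}_R(R/\mathfrak{a}^{k},M)\cong \operatorname{Hom}_R(R/\mathfrak{a},M)$ for all $a\in R$; (5) $\Gamma_{a}(M)\cong \operatorname{Hom}_R(R/\mathfrak{a},M)$ for all $a\in R$; (6) for all $a\in R$, $0\to \Gamma_{a}(M)\to M\to aM\to 0$ is a short exact sequence, where the first map is the inclusion and the second is $m\mapsto am$.
   Context: All rings are commutative with identity. For an $R$-module $M$ and $a\in R$: $M$ is $a$-reduced if for all $m\in M$, $a^{2}m=0$ implies $am=0$; $M$ is reduced if it is $a$-reduced for every $a\in R$. $\Gamma_{a}(M)=\{m\in M \mid a^{k}m=0 \text{ for some } k\in\mathbb{Z}^{+}\}$, $a\Gamma_{a}(M)=\{am \mid m\in \Gamma_a(M)\}$, and $(0:_M a^{k})=\{m\in M\mid a^{k}m=0\}$. *)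

(* Defs.v *)
From HB Require Import structures.
From mathcomp Require Import all_boot all_order all_algebra.
Set Implicit Arguments. Unset Strict Implicit. Unset Printing Implicit Defensive.
Import Order.TTheory GRing.Theory.
Local Open Scope ring_scope.

Section Defs.
Variables (R : comPzRingType) (M : lmodType R).

Definition a_reduced (a : R) : Prop :=
  forall m : M, a ^+ 2 *: m = 0 -> a *: m = 0.
Definition reduced : Prop := forall a : R, a_reduced a.

Definition Gamma (a : R) (m : M) : Prop := exists k : nat, (0 < k)%N /\ a ^+ k *: m = 0.

Definition annM (a : R) (k : nat) (m : M) : Prop := a ^+ k *: m = 0.

Definition aM (a : R) (y : M) : Prop := exists m : M, y = a *: m.

Definition pideal (a : R) (k : nat) (x : R) : Prop := exists r : R, x = a ^+ k * r.

(* Hom_R(R/I, M), represented (universal property of the quotient R -> R/I)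
   as the R-linear maps f : R -> M vanishing on the ideal I. *)
Definition homQ (I : R -> Prop) (f : R -> M) : Prop :=
  [/\ forall r s, f (r + s) = f r + f s,
      forall r s, f (r * s) = r *: f s
    & forall x, I x -> f x = 0].
End Defs.

(* R-modules presented as "setoid submodules": a carrier type, a membership
   predicate, an equivalence (equality of elements), and the operations. *)
Record smod (R : comPzRingType) := SMod {
  sm_car :> Type;
  sm_mem : sm_car -> Prop;
  sm_eq : sm_car -> sm_car -> Prop;
  sm_add : sm_car -> sm_car -> sm_car;
  sm_scale : R -> sm_car -> sm_car
}.

Definition smod_iso (R : comPzRingType) (X Y : smod R) : Prop :=
  exists phi : X -> Y,
  [/\ forall x, sm_mem x -> sm_mem (phi x),
      forall x y, sm_mem x -> sm_mem y -> sm_eq x y -> sm_eq (phi x) (phi y),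
      forall x y, sm_mem x -> sm_mem y -> sm_eq (phi x) (phi y) -> sm_eq x y,
      (forall y, sm_mem y -> (exists2 x, sm_mem x & sm_eq (phi x) y))
    & (forall x y, sm_mem x -> sm_mem y ->
        sm_eq (phi (sm_add x y)) (sm_add (phi x) (phi y))
    /\ forall r x, sm_mem x -> sm_eq (phi (sm_scale r x)) (sm_scale r (phi x)))].

Definition sub_smod (R : comPzRingType) (M : lmodType R) (S : M -> Prop) : smod R :=
  @SMod R M S (@eq M) +%R (fun r m => r *: m).

Definition hom_smod (R : comPzRingType) (M : lmodType R) (I : R -> Prop) : smod R :=
  @SMod R (R -> M) (@homQ R M I) (fun f g => forall x, f x = g x)
    (fun f g x => f x + g x) (fun r f x => r *: f x).

(* Transition map Hom_R(R/a^k R, M) -> Hom_R(R/a^(k+1) R, M) of the direct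
   system, induced by the projection R/a^(k+1)R -> R/a^k R; on the
   representatives R -> M it is precomposition with the identity of R. *)
Definition trans (R : comPzRingType) (M : lmodType R) (f : R -> M) : R -> M :=
  fun x => f x.

(* lim_k Hom_R(R/(aR)^k, M): elements are pairs (k, f) with f in
   Hom_R(R/a^k R, M); (k,f) ~ (l,g) iff their images agree at some stage
   n >= k, l; operations computed at a common stage. *)
Definition dirlim_smod (R : comPzRingType) (M : lmodType R) (a : R) : smod R :=
  @SMod R (nat * (R -> M))%type
    (fun p => homQ (pideal a p.1) p.2)
    (fun p q => exists n : nat, [/\ (p.1 <= n)%N, (q.1 <= n)%N &
        forall x, iter (n - p.1) (@trans R M) p.2 x
                  = iter (n - q.1) (@trans R M) q.2 x])
    (fun p q => (maxn p.1 q.1,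
        fun x => iter (maxn p.1 q.1 - p.1) (@trans R M) p.2 x
               + iter (maxn p.1 q.1 - q.1) (@trans R M) q.2 x))
    (fun r p => (p.1, fun x => r *: p.2 x)).

(* Main.v *)
Require Import Defs.
From mathcomp Require Import all_boot all_order all_algebra.
Import GRing.Theory.
Local Open Scope ring_scope.

Section Aux.
Variables (R : comPzRingType) (M : lmodType R).

Definition P2 := forall a : R, forall m : M, Gamma a m -> a *: m = 0.

Lemma iter_trans n (f : R -> M) x : iter n (@trans R M) f x = f x.
Proof. by elim: n => //= n IH; rewrite /trans IH. Qed.

Lemma L12 : reduced M -> P2.
Proof.
move=> H a m [k [k0 Hk]].
case: k k0 Hk => // k _; elim: k m => [|k IH] m; first by rewrite expr1.
move=> Hk; apply: IH; rewrite exprS -scalerA; apply: H.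
by rewrite scalerA -exprD addnC addn2.
Qed.

Lemma L21 : P2 -> reduced M.
Proof. by move=> H a m Hm; apply: H; exists 2%N. Qed.

Lemma L23 : P2 -> forall (a : R) (k : nat), (0 < k)%N ->
               forall m : M, annM a 1 m <-> annM a k m.
Proof.
move=> H a k k0 m; rewrite /annM; split.
  move=> Hm; case: k k0 => // k _.
  by rewrite exprSr -scalerA Hm scaler0.
by move=> Hm; apply: H; exists k.
Qed.

Lemma L32 : (forall (a : R) (k : nat), (0 < k)%N ->
               forall m : M, annM a 1 m <-> annM a k m) -> P2.
Proof.
move=> H a m [k [k0 Hk]].
have := (H a k k0 m).2 Hk; by rewrite /annM expr1.
Qed.

Lemma hom1 (I : R -> Prop) (f : R -> M) x : homQ I f -> f x = x *: f 1.
Proof. by case=> _ Hm _; rewrite -Hm mulr1. Qed.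
Arguments hom1 {I f} x.

Lemma L25 : P2 -> forall a : R,
  smod_iso (sub_smod (@Gamma R M a)) (hom_smod M (pideal a 1)).
Proof.
move=> H a.
exists (fun (m : M) (x : R) => x *: m); split => /=.
- move=> m Hm; split.
  + by move=> r s; rewrite scalerDl.
  + by move=> r s; rewrite scalerA.
  + by move=> x [r ->]; rewrite mulrC -scalerA expr1 (H a m Hm) scaler0.
- by move=> x y _ _ -> z.
- by move=> x y _ _ /(_ 1); rewrite !scale1r.
- move=> f Hf; exists (f 1).
    exists 1%N; split => //.
    case: Hf => _ Hm Hz; rewrite -Hm mulr1; apply: Hz; by exists 1; rewrite mulr1.
  by move=> x; rewrite -(hom1 x Hf).
- move=> x y _ _; split; first by move=> z; rewrite scalerDr.
  by move=> r m _ z; rewrite !scalerA mulrC.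
Qed.

Lemma L52 : (forall a : R,
  smod_iso (sub_smod (@Gamma R M a)) (hom_smod M (pideal a 1))) -> P2.
Proof.
move=> H a m Hm.
have [phi [Hmem _ Hinj _ Hlin]] := H a.
have G0 : Gamma a (0 : M) by exists 1%N; rewrite scaler0.
have Gam : Gamma a (a *: m).
  by case: Hm => k [k0 Hk]; exists k; split => //; rewrite scalerA -exprSr exprS -scalerA Hk scaler0.
have /Hinj : sm_eq (phi (@sm_scale _ (sub_smod (@Gamma R M a)) a m))
                   (phi (@sm_scale _ (sub_smod (@Gamma R M a)) 0 (0 : M))).
  move=> x.
  have [_ Hs] := Hlin m m Hm Hm.
  rewrite (Hs a m Hm) (Hs 0 0 G0) /= scale0r.
  have [_ Hh Hz] := Hmem m Hm.
  by rewrite -Hh; apply: Hz; exists x; rewrite expr1.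
by rewrite /= scaler0; apply.
Qed.

Lemma L24 : P2 -> forall a : R,
  smod_iso (dirlim_smod M a) (hom_smod M (pideal a 1)).
Proof.
move=> H a.
have key : forall p : (nat * (R -> M))%type, homQ (pideal a p.1) p.2 ->
    a *: p.2 1 = 0.
  case=> k f /= [_ Hm Hz].
  case: k Hz => [|k] Hz.
    by rewrite -Hm mulr1; apply: Hz; exists a; rewrite expr0 mul1r.
  apply: H; exists k.+1; split => //.
  by rewrite -Hm mulr1; apply: Hz; exists 1; rewrite mulr1.
exists (fun (p : (nat * (R -> M))%type) (x : R) => x *: p.2 1); split => /=.
- move=> p Hp; split.
  + by move=> r s; rewrite scalerDl.
  + by move=> r s; rewrite scalerA.
  + by move=> x [r ->]; rewrite mulrC -scalerA expr1 (key p Hp) scaler0.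
- move=> p q _ _ [n [_ _ E]] x.
  by have := E 1; rewrite !iter_trans => ->.
- move=> p q Hp Hq /(_ 1); rewrite !scale1r => E.
  exists (maxn p.1 q.1); split; rewrite ?leq_maxl ?leq_maxr //.
  by move=> x; rewrite !iter_trans (hom1 x Hp) (hom1 x Hq) E.
- move=> f Hf; exists (1%N, f) => //.
  by move=> x; rewrite /= -(hom1 x Hf).
- move=> x y _ _; split.
    by move=> z; rewrite /= !iter_trans; exact: scalerDr.
  by move=> r m _ z; rewrite /= !scalerA mulrC.
Qed.

Lemma L42 : (forall a : R,
  smod_iso (dirlim_smod M a) (hom_smod M (pideal a 1))) -> P2.
Proof.
move=> H a m [k [k0 Hk]].
have [phi [Hmem _ Hinj _ Hlin]] := H a.
pose f := fun x : R => x *: m.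
have Hf : homQ (pideal a k) f.
  split; rewrite /f.
  + by move=> r s; rewrite scalerDl.
  + by move=> r s; rewrite scalerA.
  + by move=> x [r ->]; rewrite mulrC -scalerA Hk scaler0.
pose p := (k, f) : dirlim_smod M a.
have Hp : sm_mem p by [].
have Ha : sm_mem (sm_scale a p).
  split; rewrite /= /f.
  + by move=> r s; rewrite scalerDl scalerDr.
  + by move=> r s; rewrite !scalerA mulrCA mulrA.
  + by move=> x [r ->]; rewrite [a ^+ k * r]mulrC -scalerA Hk !scaler0.
have Hzz : sm_mem (sm_scale 0 p).
  by split => [r s|r s|x _] /=; rewrite !scale0r ?addr0 ?scaler0.
have HH : sm_eq (phi (sm_scale a p)) (phi (sm_scale 0 p)).
  move=> x.
  have [_ Hs] := Hlin p p Hp Hp.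
  rewrite (Hs a p Hp) (Hs 0 p Hp) /= scale0r.
  have [_ Hh Hz] := Hmem p Hp.
  by rewrite -Hh; apply: Hz; exists x; rewrite expr1.
have [n [_ _ E]] := Hinj _ _ Ha Hzz HH.
by have := E 1; rewrite !iter_trans /= /f scale1r scale0r.
Qed.

End Aux.

Theorem mainTheorem2 (R : comPzRingType) (M : lmodType R) :
  [<->
   (* (1) *) reduced M;
   (* (2) *) forall a : R, forall m : M, Gamma a m -> a *: m = 0;
   (* (3) *) forall (a : R) (k : nat), (0 < k)%N ->
               forall m : M, annM a 1 m <-> annM a k m;
   (* (4) *) forall a : R,
               smod_iso (dirlim_smod M a) (hom_smod M (pideal a 1));
   (* (5) *) forall a : R,
               smod_iso (sub_smod (@Gamma R M a)) (hom_smod M (pideal a 1));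
   (* (6) *) forall a : R,
               [/\ (* inclusion Gamma_a(M) -> M is injective *)
                   forall m m' : M, Gamma a m -> Gamma a m' -> m = m' -> m = m',
                   (* image of the inclusion = kernel of m |-> a m *)
                   forall m : M, Gamma a m <-> a *: m = 0
                 & (* m |-> a m maps M onto aM *)
                   forall y : M, aM a y -> exists m : M, a *: m = y]].
Proof.
tfae.
- exact: L12.
- exact: L23.
- by move=> H; apply: L24; apply: L32.
- by move=> H; apply: L25; apply: L42.
- move=> H a; split.
  + by move=> m m' _ _.
  + move=> m; split; first exact: (@L52 _ _ H a m).
    by move=> Hm; exists 1%N; split => //; rewrite expr1.
  + by move=> y [m ->]; exists m.
- move=> H; apply: L21 => a m Hm.
  by have [_ E _] := H a; exact: (proj1 (E m) Hm).
Qed.
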